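(* Let $a,b,n$ be positive integers and $h(j)=aj^n+b$ for $j\ge0$, $h(j)=0$ for $j<0$. Then $\beta_d^d(h)>0$ for every integer $d\ge 1$.
   Context: For a function $h:\mathbb Z\to\mathbb Z_{\ge0}$ vanishing for all sufficiently negative arguments and integers $k\le d$, $\beta_k^d(h)=\sum_{j\le k}(-1)^{k-j}\binom{d-j}{k-j}h(j)$. *)

(* Defs.v *)
From mathcomp Require Import all_boot all_order all_algebra.
Set Implicit Arguments. Unset Strict Implicit. Unset Printing Implicit Defensive.
Import Order.TTheory GRing.Theory Num.Theory.
Local Open Scope ring_scope.

(* beta_k^d(h) = \sum_{j <= k} (-1)^(k-j) C(d-j, k-j) h(j), for h : Z -> Z
   vanishing below [lo] (so the sum over j <= k reduces to lo <= j <= k).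
   We index by i = k - j, i = 0 .. k - lo:
     (-1)^(k-j) = (-1)^i,  C(d-j, k-j) = C((d-k) + i, i).
   [lo] is any integer with h j = 0 for all j < lo and lo <= k; the value
   does not depend on this choice. *)
Definition beta (h : int -> int) (lo : int) (k d : int) : int :=
  \sum_(0 <= i < `|k - lo|%N.+1)
     (-1) ^+ i * ('C(`|d - k|%N + i, i))%:Z * h (k - i%:Z).

(* Main.v *)
Require Import Defs.
From mathcomp Require Import all_boot all_order all_algebra.
Import Order.TTheory GRing.Theory Num.Theory.
Local Open Scope ring_scope.

Section S.
Variable h : int -> int.
Definition T (m : nat) : int := \sum_(0 <= i < m.+1) (-1) ^+ i * h (m%:Z - i%:Z).

Lemma TS m : T m.+1 = h (m.+1)%:Z - T m.
Proof.
rewrite /T big_nat_recl // expr0 mul1r subr0; congr (_ + _).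
rewrite -sumrN; apply: eq_bigr => i _.
rewrite exprS mulN1r mulNr; congr (- (_ * h _)).
by rewrite -[(m.+1)%N]addn1 -[(i.+1)%N]addn1 !PoszD opprD addrACA subrr addr0.
Qed.
End S.

Theorem lemma3p2 (a b n : nat) (ha : (0 < a)%N) (hb : (0 < b)%N) (hn : (0 < n)%N)
  (h : int -> int)
  (hpos : forall j : int, 0 <= j -> h j = a%:Z * j ^+ n + b%:Z)
  (hneg : forall j : int, j < 0 -> h j = 0)
  (d : int) (hd : 1 <= d) (lo : int) (hlo : lo <= 0) :
  0 < beta h lo d d.
Proof.
have hf : forall m : nat, h m%:Z = (a * m ^ n + b)%N%:Z.
  by move=> m; rewrite hpos // PoszD PoszM -!natz natrX.
have inv : forall m, 0 < T h m /\ T h m <= h m%:Z.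
  elim=> [|m [IH1 IH2]].
    by rewrite /T big_nat1 expr0 mul1r subr0 hf; split => //; rewrite ltz_nat addn_gt0 hb orbT.
  rewrite TS; split; last by rewrite lerBlDr lerDl ltW.
  rewrite subr_gt0; apply: (le_lt_trans IH2).
  rewrite !hf ltz_nat ltn_add2r ltn_pmul2l // ltn_exp2r //.
case: d hd => [m|m] //= hd.
have -> : beta h lo m m = T h m.
  rewrite /beta subrr /= /T.
  have Hm : (m.+1 <= `|m%:Z - lo|.+1)%N.
    rewrite ltnS -lez_nat gez0_abs; last by rewrite subr_ge0 (le_trans hlo).
    by rewrite lerDl oppr_ge0.
  rewrite (@big_cat_nat _ _ _ m.+1 0 _ _ _ (leq0n _) Hm) /= [X in _ + X]big_nat_cond [X in _ + X]big1 ?addr0.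
    by apply: eq_bigr => i _; rewrite add0n binn mulr1.
  move=> i /andP[/andP[Hi _] _]; rewrite hneg ?mulr0 //.
  by rewrite subr_lt0 ltz_nat.
by case: (inv m).
Qed.
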